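(* Let $G=(V,E)$ be a graph on $V=\{1,\ldots,n\}$ and $b(\mathbf x)=\sum_{ij\in E}a_{ij}x_ix_j$ with $a_{ij}\neq 0$ for all $ij\in E$. Then $Q=\operatorname{conv}(B)$ if and only if every cycle in $G$ contains an even number of positive edges and an even number of negative edges.
   Context: An edge $ij$ is positive if $a_{ij}>0$ and negative if $a_{ij}<0$. $B=\{(\mathbf x,z)\in[0,1]^n\times\mathbb R: z=b(\mathbf x)\}$ is the graph of $b$ and $\operatorname{conv}(B)$ its convex hull. The McCormick polytopes are $P=\{(\mathbf x,\mathbf y)\in[0,1]^n\times[0,1]^{|E|}: y_{ij}\le x_i,\ y_{ij}\le x_j,\ y_{ij}\ge x_i+x_j-1\ \forall ij\in E\}$ and $Q=\{(\mathbf x,z)\in[0,1]^n\times\mathbb R:\exists\mathbf y\in[0,1]^{|E|}\text{ with }(\mathbf x,\mathbf y)\in P,\ z=\sum_{ij\in E}a_{ij}y_{ij}\}$. *)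

(* Defs.v *)
From Stdlib Require Import Reals.
From mathcomp Require Import all_boot.

Set Implicit Arguments.
Unset Strict Implicit.
Unset Printing Implicit Defensive.

(* The graph G = (V,E) has vertex set 'I_n (= {0,...,n-1}, a relabelling of
   {1,...,n}); it is given by a symmetric irreflexive adjacency relation adj.
   An (undirected) edge ij is represented by the pair i < j with adj i j.
   The coefficients a : 'I_n -> 'I_n -> R are assumed symmetric (a_ij = a_ji). *)

Definition in_box (n : nat) (x : 'I_n -> R) : Prop :=
  forall i, (Rle 0 (x i) /\ Rle (x i) 1).

Definition bfun (n : nat) (adj : rel 'I_n) (a : 'I_n -> 'I_n -> R)
  (x : 'I_n -> R) : R :=
  \big[Rplus/R0]_(i < n) \big[Rplus/R0]_(j < n | (i < j)%N && adj i j)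
     (Rmult (Rmult (a i j) (x i)) (x j)).

Definition inQ (n : nat) (adj : rel 'I_n) (a : 'I_n -> 'I_n -> R)
  (x : 'I_n -> R) (z : R) : Prop :=
  in_box x /\
  exists y : 'I_n -> 'I_n -> R,
    (forall i j : 'I_n, (i < j)%N -> adj i j ->
       (Rle 0 (y i j) /\ Rle (y i j) 1) /\ Rle (y i j) (x i) /\ Rle (y i j) (x j) /\
       Rle (Rminus (Rplus (x i) (x j)) 1) (y i j)) /\
    z = \big[Rplus/R0]_(i < n) \big[Rplus/R0]_(j < n | (i < j)%N && adj i j)
          (Rmult (a i j) (y i j)).

Definition inConvB (n : nat) (adj : rel 'I_n) (a : 'I_n -> 'I_n -> R)
  (x : 'I_n -> R) (z : R) : Prop :=
  exists (m : nat) (lam : 'I_m -> R) (p : 'I_m -> 'I_n -> R),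
    (forall k, Rle 0 (lam k)) /\
    \big[Rplus/R0]_(k < m) lam k = R1 /\
    (forall k, in_box (p k)) /\
    (forall i, x i = \big[Rplus/R0]_(k < m) (Rmult (lam k) (p k i))) /\
    z = \big[Rplus/R0]_(k < m) (Rmult (lam k) (bfun adj a (p k))).

Definition posb (r : R) : bool := if Rlt_dec 0 r then true else false.
Definition negb_R (r : R) : bool := if Rlt_dec r 0 then true else false.

(* The edges of the cycle s are zip s (rot 1 s). *)
Definition even_sign_cycles (n : nat) (adj : rel 'I_n)
  (a : 'I_n -> 'I_n -> R) : Prop :=
  forall s : seq 'I_n, (2 < size s)%N -> uniq s -> cycle adj s ->
    ~~ odd (count (fun e => posb (a e.1 e.2)) (zip s (rot 1 s))) /\
    ~~ odd (count (fun e => negb_R (a e.1 e.2)) (zip s (rot 1 s))).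

(* Main.v *)
Require Import Defs.
From Stdlib Require Import Reals Lra Lia.
From HB Require Import structures.
From mathcomp Require Import all_boot zify.
Set Implicit Arguments. Unset Strict Implicit.

Definition par n (c : rel 'I_n) (x : 'I_n) (p : seq 'I_n) :=
  count (fun e => c e.1 e.2) (zip (x :: p) p).

Lemma par_cons n (c : rel 'I_n) x y q : par c x (y :: q) = c x y + par c y q.
Proof. by []. Qed.
Lemma par_nil n (c : rel 'I_n) x : par c x [::] = 0.
Proof. by []. Qed.
Lemma par_cat n (c : rel 'I_n) x p q : par c x (p ++ q) = par c x p + par c (last x p) q.
Proof.
elim: p x => [|y p IH] x /=; first by rewrite par_nil.
by rewrite !par_cons IH addnA.
Qed.

Lemma not_uniq_split (T : eqType) (p : seq T) : ~~ uniq p ->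
  exists p1 v p2 p3, p = p1 ++ v :: p2 ++ v :: p3.
Proof.
elim: p => [|y q IH] //=. rewrite negb_and negbK. case/orP.
  move=> yq. case/splitPr: yq => q1 q2. by exists [::], y, q1, q2.
move=> nu. have [p1 [v [p2 [p3 ->]]]] := IH nu. by exists (y :: p1), v, p2, p3.
Qed.

Lemma zip_trunc (T : Type) (l : seq T) x y :
  zip (x :: rcons l y) (rcons l y) = zip (x :: l) (rcons l y).
Proof. by elim: l x => [|z l IH] x //=; rewrite IH. Qed.

Lemma closed_even n (adj c : rel 'I_n) :
  irreflexive adj -> (forall u v, adj u v -> c u v = c v u) ->
  (forall s : seq 'I_n, 2 < size s -> uniq s -> cycle adj s ->
     ~~ odd (count (fun e => c e.1 e.2) (zip s (rot 1 s)))) ->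
  forall p x, path adj x p -> last x p = x -> ~~ odd (par c x p).
Proof.
move=> irr csym Hcyc p.
elim: {p}(size p).+1 {-2}p (ltnSn (size p)) => // N IH p Hp x Hpath Hlast.
case: (boolP (uniq p)) => [up|nup].
  case/lastP: p Hp Hpath Hlast up => [|t y] Hp Hpath Hlast up; first by rewrite par_nil.
  rewrite last_rcons in Hlast; subst y.
  case: t Hp Hpath up => [|y t] Hp Hpath up.
    by move: Hpath => /=; rewrite irr.
  case: t Hp Hpath up => [|y2 t] Hp Hpath up.
    move: Hpath => /= /andP [axy _].
    rewrite !par_cons par_nil (csym _ _ axy) addn0 oddD. by case: (c y x).
  rewrite rcons_uniq in up.
  have H := Hcyc (x :: [:: y, y2 & t]) isT up Hpath.
  by rewrite rot1_cons -zip_trunc in H.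
have [p1 [v [p2 [p3 E]]]] := not_uniq_split nup.
subst p.
move: Hpath; rewrite cat_path => /andP [P1]. rewrite /= => /andP [A1].
rewrite cat_path => /andP [P2] /= /andP [A2 P3].
move: Hlast; rewrite last_cat /= last_cat /= => Hlast.
have W1 := IH (p1 ++ v :: p3) _ x.
have W2 := IH (p2 ++ [:: v]) _ v.
rewrite size_cat /= size_cat /= in Hp.
have W1' : ~~ odd (par c x (p1 ++ v :: p3)).
  apply: W1.
  - rewrite size_cat /=. lia.
  - by rewrite cat_path P1 /= A1 P3.
  - by rewrite last_cat.
have W2' : ~~ odd (par c v (p2 ++ [:: v])).
  apply: W2.
  - rewrite size_cat /=. lia.
  - by rewrite cat_path P2 /= A2.
  - by rewrite last_cat.
move: W1' W2'. rewrite !par_cat !par_cons par_cat par_cons !par_nil.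
rewrite !oddD. by case: (odd (par c x p1)); case: (c (last x p1) v); case: (odd (par c v p3));
  case: (odd (par c v p2)); case: (c (last v p2) v).
Qed.

Definition e2 n (adj c : rel 'I_n) : rel ('I_n * bool) :=
  fun p q => adj p.1 q.1 && (q.2 == p.2 (+) c p.1 q.1).

Lemma e2_proj n (adj c : rel 'I_n) P u b :
  path (e2 adj c) (u, b) P ->
  path adj u (map fst P) /\ (last (u, b) P).2 = b (+) odd (par c u (map fst P)).
Proof.
elim: P u b => [|[w b'] P IH] u b /=; first by rewrite addbF.
case/andP => /andP [/= auw /eqP /= eb'] HP.
have [H1 H2] := IH _ _ HP.
split; first by rewrite auw.
rewrite H2 par_cons oddD oddb eb' addbA. by [].
Qed.

Lemma e2_lift n (adj c : rel 'I_n) p r b :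
  path adj r p -> exists b', connect (e2 adj c) (r, b) (last r p, b').
Proof.
elim: p r b => [|y p IH] r b /=; first by exists b; exact: connect0.
case/andP => ary Hp.
have [b' Hb'] := IH y (b (+) c r y) Hp.
exists b'. apply: connect_trans Hb'. apply: connect1. by rewrite /e2 /= ary eqxx.
Qed.

Lemma labeling n (adj c : rel 'I_n) :
  symmetric adj -> irreflexive adj -> (forall u v, adj u v -> c u v = c v u) ->
  (forall s : seq 'I_n, 2 < size s -> uniq s -> cycle adj s ->
     ~~ odd (count (fun e => c e.1 e.2) (zip s (rot 1 s)))) ->
  exists o : 'I_n -> bool, forall u v, adj u v -> c u v = (o u != o v).
Proof.
move=> asym irr csym Hcyc.
have symA : connect_sym adj := sym_connect_sym asym.
have e2sym : symmetric (e2 adj c).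
  move=> [u b] [v b']. rewrite /e2 /= asym.
  case A: (adj v u) => //=. rewrite (csym _ _ A).
  by case: b; case: b'; case: (c u v).
have sym2 : connect_sym (e2 adj c) := sym_connect_sym e2sym.
have F3 : forall w, ~~ connect (e2 adj c) (w, false) (w, true).
  move=> w. apply/negP => /connectP [P HP Hl].
  have [H1 H2] := e2_proj HP.
  rewrite -Hl /= in H2.
  have := closed_even irr csym Hcyc H1.
  have -> : last w (map fst P) = w.
    by rewrite (_ : w = (w, false).1) // last_map -Hl.
  by rewrite -H2 => /(_ erefl).
exists (fun v => connect (e2 adj c) (root adj v, false) (v, true)).
move=> u v auv.
have ruv : root adj v = root adj u by apply/esym/(rootP symA)/connect1.
rewrite ruv.
set r := root adj u.
have excl : forall w, connect adj r w ->
    connect (e2 adj c) (r, false) (w, true) = ~~ connect (e2 adj c) (r, false) (w, false).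
  move=> w /connectP [p Hp ->].
  have [b' Hb'] := e2_lift c false Hp.
  case E1: (connect (e2 adj c) (r, false) (last r p, false)).
    apply/negP => E2. apply: (negP (F3 (last r p))).
    apply: connect_trans E2. by rewrite sym2.
  by case: b' Hb' E1 => // ->.
have step : forall b, connect (e2 adj c) (r, false) (u, b) =
                      connect (e2 adj c) (r, false) (v, b (+) c u v).
  move=> b. apply: (same_connect_r sym2). apply: connect1. by rewrite /e2 /= auv eqxx.
have ru : connect adj r u by rewrite symA /r connect_root.
case C: (c u v).
  have := step false. rewrite C /= => H. rewrite -H excl //. by case: connect.
have := step true. rewrite C /= => H. by rewrite -H eqxx.
Qed.

Lemma par_flip n (f : 'I_n -> bool) x p :
  odd (count (fun e => f e.1 != f e.2) (zip (x :: p) p)) = (f x != f (last x p)).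
Proof.
elim: p x => [|y p IH] x /=; first by rewrite eqxx.
rewrite oddD oddb IH. by case: (f x); case: (f y); case: (f (last y p)).
Qed.

Lemma cycle_flip n (f : 'I_n -> bool) s :
  ~~ odd (count (fun e => f e.1 != f e.2) (zip s (rot 1 s))).
Proof.
case: s => [|x t] //. by rewrite rot1_cons -zip_trunc par_flip last_rcons eqxx.
Qed.

Lemma zip_path_mem (T : eqType) (e : rel T) x p q :
  path e x p -> q \in zip (x :: p) p -> [/\ e q.1 q.2, q.1 \in x :: p & q.2 \in p].
Proof.
elim: p x => [|y p IH] x //=. case/andP => exy Hp. rewrite inE => /orP [/eqP -> /=|Hq].
  by rewrite exy !inE !eqxx.
have [H1 H2 H3] := IH y Hp Hq. split => //; [by apply/orP; right | by rewrite in_cons H3 orbT].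
Qed.

Lemma cycle_edge_mem (T : eqType) (e : rel T) s q :
  cycle e s -> q \in zip s (rot 1 s) -> [/\ e q.1 q.2, q.1 \in s & q.2 \in s].
Proof.
case: s => [|x t] //= Hc. rewrite rot1_cons -zip_trunc => Hq.
have [H1 H2 H3] := zip_path_mem Hc Hq. split => //.
  move: H2; rewrite !inE mem_rcons inE. by case/orP => [->|/orP [->|->]]; rewrite ?orbT.
move: H3; by rewrite mem_rcons.
Qed.

HB.instance Definition _ := Monoid.isComLaw.Build R R0 Rplus
  (fun x y z => esym (Rplus_assoc x y z)) Rplus_comm Rplus_0_l.

Local Open Scope R_scope.

Lemma sum_mulr (I : Type) (r : seq I) (P : pred I) (F : I -> R) c :
  c * \big[Rplus/R0]_(i <- r | P i) F i = \big[Rplus/R0]_(i <- r | P i) (c * F i).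
Proof. exact: (big_morph (fun x => c * x) (Rmult_plus_distr_l c) (Rmult_0_r c)). Qed.

Lemma sum_opp (I : Type) (r : seq I) (P : pred I) (F : I -> R) :
  -(\big[Rplus/R0]_(i <- r | P i) F i) = \big[Rplus/R0]_(i <- r | P i) (- F i).
Proof. exact: (big_morph Ropp Ropp_plus_distr Ropp_0). Qed.

Lemma sum_le (I : Type) (r : seq I) (P : pred I) (F G : I -> R) :
  (forall i, P i -> F i <= G i) ->
  \big[Rplus/R0]_(i <- r | P i) F i <= \big[Rplus/R0]_(i <- r | P i) G i.
Proof. move=> H. apply: (big_ind2 Rle) => //; [exact: Rle_refl | exact: Rplus_le_compat]. Qed.

Lemma sum_ge0 (I : Type) (r : seq I) (P : pred I) (F : I -> R) :
  (forall i, P i -> 0 <= F i) -> 0 <= \big[Rplus/R0]_(i <- r | P i) F i.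
Proof. move=> H. apply: (big_ind (fun x => 0 <= x)) => //; [exact: Rle_refl | move=> *; lra]. Qed.

Lemma sum_eq0 (I : finType) (P : pred I) (F : I -> R) :
  (forall i, P i -> 0 <= F i) -> \big[Rplus/R0]_(i | P i) F i = 0 ->
  forall i, P i -> F i = 0.
Proof.
move=> H0 Hs i Pi. rewrite (bigD1 i Pi) /= in Hs.
have : 0 <= \big[Rplus/R0]_(j | P j && (j != i)) F j.
  apply: sum_ge0 => j /andP [Pj _]; exact: H0.
have := H0 i Pi. lra.
Qed.

Lemma sum_split (I : Type) (r : seq I) (P : pred I) (F G : I -> R) :
  \big[Rplus/R0]_(i <- r | P i) (F i + G i) =
  \big[Rplus/R0]_(i <- r | P i) F i + \big[Rplus/R0]_(i <- r | P i) G i.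
Proof. exact: big_split. Qed.

Definition mlam m1 m2 (t : R) (l1 : 'I_m1 -> R) (l2 : 'I_m2 -> R) (k : 'I_(m1 + m2)) : R :=
  match split k with inl i => t * l1 i | inr j => (1 - t) * l2 j end.
Definition mpt (T : Type) m1 m2 (p1 : 'I_m1 -> T) (p2 : 'I_m2 -> T) (k : 'I_(m1 + m2)) : T :=
  match split k with inl i => p1 i | inr j => p2 j end.

Lemma merge_sum (T : Type) m1 m2 t l1 l2 (p1 : 'I_m1 -> T) (p2 : 'I_m2 -> T) (H : T -> R) :
  \big[Rplus/R0]_(k < m1 + m2) (mlam t l1 l2 k * H (mpt p1 p2 k)) =
  t * \big[Rplus/R0]_(i < m1) (l1 i * H (p1 i)) +
  (1 - t) * \big[Rplus/R0]_(j < m2) (l2 j * H (p2 j)).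
Proof.
rewrite big_split_ord /mlam /mpt !sum_mulr. congr (_ + _).
  apply: eq_bigr => i _. rewrite (unsplitK (inl i : 'I_m1 + 'I_m2)). ring.
apply: eq_bigr => i _. rewrite (unsplitK (inr i : 'I_m1 + 'I_m2)). ring.
Qed.

Lemma merge_ge0 m1 m2 t (l1 : 'I_m1 -> R) (l2 : 'I_m2 -> R) :
  0 <= t <= 1 -> (forall i, 0 <= l1 i) -> (forall j, 0 <= l2 j) ->
  forall k, 0 <= mlam t l1 l2 k.
Proof.
move=> Ht H1 H2 k; rewrite /mlam; case: split => i.
  have := H1 i; nra.
have := H2 i; nra.
Qed.

Lemma merge_one m1 m2 t (l1 : 'I_m1 -> R) (l2 : 'I_m2 -> R) :
  \big[Rplus/R0]_(i < m1) l1 i = 1 -> \big[Rplus/R0]_(j < m2) l2 j = 1 ->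
  \big[Rplus/R0]_(k < m1 + m2) mlam t l1 l2 k = 1.
Proof.
move=> H1 H2.
have := merge_sum t l1 l2 (fun _ : 'I_m1 => tt) (fun _ : 'I_m2 => tt) (fun _ => 1).
rewrite (eq_bigr (fun k => mlam t l1 l2 k)); last by move=> *; ring.
rewrite (eq_bigr (fun k => l1 k) (F1 := fun i => l1 i * 1)); last by move=> *; ring.
rewrite (eq_bigr (fun k => l2 k) (F1 := fun i => l2 i * 1)); last by move=> *; ring.
rewrite H1 H2 => ->. ring.
Qed.

Lemma posbP r : posb r = true <-> 0 < r.
Proof. rewrite /posb; case: Rlt_dec => //. Qed.

Lemma min_exists (T : finType) (P : pred T) (f : T -> R) :
  (exists x, P x) -> exists x, P x /\ forall y, P y -> f x <= f y.
Proof.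
suff H : forall l : seq T, (exists x, (x \in l) && P x) ->
  exists x, ((x \in l) && P x) /\ forall y, y \in l -> P y -> f x <= f y.
  move=> [x Px]. have [|y [/andP [_ Py] Hy]] := H (enum T).
    by exists x; rewrite mem_enum Px.
  exists y; split => // y' Py'. apply: Hy => //. by rewrite mem_enum.
elim=> [|y l IH] [x Hx] //.
case Hl: (has P l).
  have [x1 [/andP [x1l Px1] Hx1]] : exists x, ((x \in l) && P x) /\ forall y, y \in l -> P y -> f x <= f y.
    apply: IH. case/hasP: Hl => x2 ? ?. exists x2. by apply/andP.
  case Py: (P y); last first.
    exists x1; split; first by rewrite inE x1l orbT.
    move=> y'; rewrite inE => /orP [/eqP ->|]; first by rewrite Py.
    exact: Hx1.
  case: (Rlt_dec (f y) (f x1)) => Hlt.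
    exists y; split; first by rewrite inE eqxx.
    move=> y'; rewrite inE => /orP [/eqP -> _|y'l Py']; first exact: Rle_refl.
    have := Hx1 y' y'l Py'. lra.
  exists x1; split; first by rewrite inE x1l orbT.
  move=> y'; rewrite inE => /orP [/eqP -> _|]; first lra.
  exact: Hx1.
have Py : P y.
  case/andP: Hx; rewrite inE => /orP [/eqP <- //|xl Px].
  move: Hl. have : has P l by apply/hasP; exists x. by move=> ->.
exists y; split; first by rewrite inE eqxx.
move=> y'; rewrite inE => /orP [/eqP -> _|y'l Py']; first exact: Rle_refl.
move: Hl. have : has P l by apply/hasP; exists y'. by move=> ->.
Qed.

Definition chain_prop n (z : 'I_n -> R) :=
  exists m (lam : 'I_m -> R) (q : 'I_m -> 'I_n -> R),
  (forall k, 0 <= lam k) /\ \big[Rplus/R0]_(k < m) lam k = 1 /\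
  (forall k v, q k v = 0 \/ q k v = 1) /\
  (forall v, \big[Rplus/R0]_(k < m) (lam k * q k v) = z v) /\
  (forall k u v, z u <= z v -> q k u <= q k v).

Lemma chain_single n (z : 'I_n -> R) :
  (forall v, z v = 0 \/ z v = 1) -> chain_prop z.
Proof.
move=> Hz. exists 1%N, (fun _ => 1), (fun _ => z).
split; first by move=> *; lra.
split; first by rewrite big_ord1.
split; first by [].
split; first by move=> v; rewrite big_ord1; ring.
by [].
Qed.

Lemma chain n (z : 'I_n -> R) : in_box z -> chain_prop z.
Proof.
move=> Hz.
suff H : forall N (z : 'I_n -> R), in_box z -> (#|[pred v | posb (z v)]| <= N)%N -> chain_prop z.
  exact: (H _ z Hz (leqnn _)).
clear z Hz. elim=> [|N IH] z Hz HN.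
  apply: chain_single => v. left.
  have Hv : posb (z v) = false.
    apply/negP => Hp. move: HN. rewrite leqn0 => /eqP /card0_eq /(_ v).
    by rewrite inE Hp.
  have := Hz v. move: Hv. rewrite /posb. case: Rlt_dec => // ? _ ?. lra.
case: (pickP [pred v | posb (z v)]) => [v0' Hv0'|H0]; last first.
  apply: chain_single => v. left.
  have := H0 v. have := Hz v. rewrite /= /posb. case: Rlt_dec => // ? ? _. lra.
have [v0 [Pv0 Hmin]] := min_exists (P := [pred v | posb (z v)]) z (ex_intro _ v0' Hv0').
have [mu mudef] : exists mu, mu = z v0 by eexists.
rewrite -mudef in Hmin.
have mupos : 0 < mu by rewrite mudef; apply/posbP.
have mule : mu <= 1 by have := Hz v0; rewrite mudef; lra.
case: (Rlt_dec mu 1) => mult1; last first.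
  apply: chain_single => v. case Pv: (posb (z v)).
    right. have := Hmin v Pv. have := Hz v. lra.
  left. have := Hz v. move: Pv. rewrite /posb. case: Rlt_dec => // ? _ ?. lra.
pose z' v := if posb (z v) then (z v - mu) / (1 - mu) else 0.
have d0 : 0 < / (1 - mu) by apply: Rinv_0_lt_compat; lra.
have dd : (1 - mu) * / (1 - mu) = 1 by field; lra.
have Hz' : in_box z'.
  move=> v. rewrite /z'. case Pv: (posb (z v)); last by lra.
  have := Hmin v Pv. have := Hz v. rewrite /Rdiv. move=> [? ?] ?. split.
    apply: Rmult_le_pos; lra.
  apply: (Rle_trans _ ((1 - mu) * / (1 - mu))); last lra.
  apply: Rmult_le_compat_r; lra.
have mono' : forall u v, z u <= z v -> z' u <= z' v.
  move=> u v Huv. rewrite /z'. case Pu: (posb (z u)).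
    have Pv : posb (z v) by apply/posbP; have := (proj1 (posbP _) Pu); lra.
    rewrite Pv /Rdiv. apply: Rmult_le_compat_r; lra.
  exact: (proj1 (Hz' v)).
have Hcard : (#|[pred v | posb (z' v)]| <= N)%N.
  suff : (#|[pred v | posb (z' v)]| < #|[pred v | posb (z v)]|)%N by lia.
  apply: proper_card. apply/properP; split.
    apply/subsetP => v. rewrite !inE /z'. by case: (posb (z v)) => //; rewrite /posb; case: Rlt_dec => // h; lra.
  exists v0 => //. rewrite inE /z' (_ : posb (z v0) = true) // -mudef Rminus_diag /Rdiv Rmult_0_l /posb.
  by case: Rlt_dec => // h; lra.
have [m' [lam' [q' [L0 [L1 [Q01 [Qm Qmono]]]]]]] := IH z' Hz' Hcard.
pose q0 v := if posb (z v) then 1 else 0.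
exists (1 + m')%N, (mlam mu (fun _ => 1) lam'), (mpt (fun _ : 'I_1 => q0) q').
split. apply: merge_ge0 => //; try lra. move=> *; lra.
split. apply: merge_one => //. by rewrite big_ord1.
split. move=> k v; rewrite /mpt; case: split => i; last exact: Q01.
  rewrite /q0; case: (posb (z v)); lra.
split. move=> v. rewrite (merge_sum mu (fun _ => 1) lam' (fun _ : 'I_1 => q0) q' (fun p => p v)).
  rewrite big_ord1 Qm /q0 /z'. case Pv: (posb (z v)).
    field. lra.
  move: Pv; rewrite /posb; case: Rlt_dec => // h _; have := Hz v; lra.
move=> k u v Huv. rewrite /mpt; case: split => i; last exact: (Qmono _ _ _ (mono' _ _ Huv)).
rewrite /q0. case Pu: (posb (z u)).
  have -> : posb (z v) by apply/posbP; have := (proj1 (posbP _) Pu); lra.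
  lra.
case: (posb (z v)); lra.
Qed.
Local Open Scope R_scope.

Lemma sum_aff m (lam f g : 'I_m -> R) A B C :
  \big[Rplus/R0]_(k < m) (lam k * (A + B * f k + C * g k)) =
  A * \big[Rplus/R0]_(k < m) lam k + B * \big[Rplus/R0]_(k < m) (lam k * f k)
  + C * \big[Rplus/R0]_(k < m) (lam k * g k).
Proof. rewrite !sum_mulr -!sum_split. apply: eq_bigr => k _. ring. Qed.

Lemma sum_bfun n (adj : rel 'I_n) a m (lam : 'I_m -> R) (p : 'I_m -> 'I_n -> R) :
  \big[Rplus/R0]_(k < m) (lam k * bfun adj a (p k)) =
  \big[Rplus/R0]_(i < n) \big[Rplus/R0]_(j < n | (i < j)%N && adj i j)
     (a i j * \big[Rplus/R0]_(k < m) (lam k * (p k i * p k j))).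
Proof.
rewrite /bfun. under eq_bigr do rewrite sum_mulr.
rewrite exchange_big. apply: eq_bigr => i _.
under eq_bigr do rewrite sum_mulr.
rewrite exchange_big. apply: eq_bigr => j _.
rewrite sum_mulr. apply: eq_bigr => k _. ring.
Qed.

Lemma sum_lam_le m (lam f g : 'I_m -> R) :
  (forall k, 0 <= lam k) -> (forall k, f k <= g k) ->
  \big[Rplus/R0]_(k < m) (lam k * f k) <= \big[Rplus/R0]_(k < m) (lam k * g k).
Proof. move=> H0 H. apply: sum_le => k _. apply: Rmult_le_compat_l; auto. Qed.

Lemma convB_Q n (adj : rel 'I_n) a x z : inConvB adj a x z -> inQ adj a x z.
Proof.
move=> [m [lam [p [L0 [L1 [Pb [Hx Hz]]]]]]].
have {}L1 : \big[Rplus/R0]_(k < m) lam k = 1 by rewrite L1.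
have S1 : \big[Rplus/R0]_(k < m) (lam k * 1) = 1.
  rewrite -[RHS]L1. apply: eq_bigr => k _; ring.
have S0 : \big[Rplus/R0]_(k < m) (lam k * 0) = 0.
  rewrite (eq_bigr (fun _ => 0)); last by move=> *; ring.
  by rewrite big1_eq.
split.
  move=> i. rewrite Hx. split.
    rewrite -S0. apply: sum_lam_le => // k; exact: (proj1 (Pb k i)).
  rewrite -S1. apply: sum_lam_le => // k; exact: (proj2 (Pb k i)).
exists (fun i j => \big[Rplus/R0]_(k < m) (lam k * (p k i * p k j))).
split; last by rewrite Hz sum_bfun.
move=> i j _ _. rewrite !Hx.
split; [split|split; [|split]].
- rewrite -S0. apply: sum_lam_le => // k. have := Pb k i; have := Pb k j. nra.
- rewrite -S1. apply: sum_lam_le => // k. have := Pb k i; have := Pb k j. nra.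
- apply: sum_lam_le => // k. have := Pb k i; have := Pb k j. nra.
- apply: sum_lam_le => // k. have := Pb k i; have := Pb k j. nra.
- have -> : \big[Rplus/R0]_(k < m) (lam k * p k i) + \big[Rplus/R0]_(k < m) (lam k * p k j) - 1
    = \big[Rplus/R0]_(k < m) (lam k * ((-1) + 1 * p k i + 1 * p k j)).
    rewrite sum_aff L1. ring.
  apply: sum_lam_le => // k. have := Pb k i; have := Pb k j. nra.
Qed.

Definition Epair m n (lam : 'I_m -> R) (p : 'I_m -> 'I_n -> R) i j :=
  \big[Rplus/R0]_(k < m) (lam k * (p k i * p k j)).

Lemma Epair_sym m n (lam : 'I_m -> R) (p : 'I_m -> 'I_n -> R) i j :
  Epair lam p i j = Epair lam p j i.
Proof. apply: eq_bigr => k _; ring. Qed.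

Lemma threshold n (x : 'I_n -> R) (o : 'I_n -> bool) : in_box x ->
  exists m (lam : 'I_m -> R) (p : 'I_m -> 'I_n -> R),
  (forall k, 0 <= lam k) /\ \big[Rplus/R0]_(k < m) lam k = 1 /\
  (forall k, in_box (p k)) /\
  (forall v, x v = \big[Rplus/R0]_(k < m) (lam k * p k v)) /\
  (forall i j, if o i == o j then (Epair lam p i j = x i \/ Epair lam p i j = x j)
               else (Epair lam p i j = 0 \/ Epair lam p i j = x i + x j - 1)).
Proof.
move=> Hx. pose z v := if o v then 1 - x v else x v.
have Hz : in_box z by move=> v; rewrite /z; case: (o v); have := Hx v; lra.
have [m [lam [q [L0 [L1 [Q01 [Qm Qmono]]]]]]] := chain Hz.
exists m, lam, (fun k v => if o v then 1 - q k v else q k v).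
split => //. split => //.
split. move=> k v; case: (o v); case: (Q01 k v) => ->; lra.
split. move=> v. case Ov: (o v).
    rewrite (eq_bigr (fun k => lam k * (1 + (-1) * q k v + 0 * q k v))); last by move=> *; ring.
    rewrite sum_aff L1 Qm /z Ov. ring.
  by rewrite Qm /z Ov.
have key : forall i j, z i <= z j ->
  (if o i == o j then (Epair lam (fun k v => if o v then 1 - q k v else q k v) i j = x i \/
                       Epair lam (fun k v => if o v then 1 - q k v else q k v) i j = x j)
   else (Epair lam (fun k v => if o v then 1 - q k v else q k v) i j = 0 \/
         Epair lam (fun k v => if o v then 1 - q k v else q k v) i j = x i + x j - 1)).
  move=> i j Hij. have Hk : forall k, q k i <= q k j := fun k => Qmono k i j Hij.
  rewrite /Epair.
  case Oi: (o i); case Oj: (o j) => /=.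
  - right. rewrite (eq_bigr (fun k => lam k * (1 + 0 * q k i + (-1) * q k j))); last first.
      move=> k _. have := Hk k. case: (Q01 k i) => ->; case: (Q01 k j) => ->; move=> *; try lra; ring.
    rewrite sum_aff L1 !Qm /z Oi Oj. ring.
  - right. rewrite (eq_bigr (fun k => lam k * (0 + (-1) * q k i + 1 * q k j))); last first.
      move=> k _. have := Hk k. case: (Q01 k i) => ->; case: (Q01 k j) => ->; move=> *; try lra; ring.
    rewrite sum_aff L1 !Qm /z Oi Oj. ring.
  - left. rewrite (eq_bigr (fun k => lam k * (0 + 0 * q k i + 0 * q k j))); last first.
      move=> k _. have := Hk k. case: (Q01 k i) => ->; case: (Q01 k j) => ->; move=> *; try lra; ring.
    rewrite sum_aff. ring.
  - left. rewrite (eq_bigr (fun k => lam k * (0 + 1 * q k i + 0 * q k j))); last first.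
      move=> k _. have := Hk k. case: (Q01 k i) => ->; case: (Q01 k j) => ->; move=> *; try lra; ring.
    rewrite sum_aff L1 !Qm /z Oi Oj. ring.
move=> i j. case: (Rle_lt_dec (z i) (z j)) => H; first exact: key.
have := key j i (Rlt_le _ _ H). rewrite Epair_sym eq_sym.
case: (o i == o j) => [[->|->]|[->|->]]; auto. right; ring.
Qed.

Lemma Q_convB n (adj : rel 'I_n) a (a_nz : forall i j, adj i j -> a i j <> R0)
  (o1 o2 : 'I_n -> bool) :
  (forall u v, adj u v -> posb (a u v) = (o1 u != o1 v)) ->
  (forall u v, adj u v -> negb_R (a u v) = (o2 u != o2 v)) ->
  forall x z, inQ adj a x z -> inConvB adj a x z.
Proof.
move=> H1 H2 x z [Hx [y [Hy Hz]]].
have [m1 [l1 [p1 [A0 [A1 [Ab [Ax AE]]]]]]] := threshold o1 Hx.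
have [m2 [l2 [p2 [B0 [B1 [Bb [Bx BE]]]]]]] := threshold o2 Hx.
have Hz1 : \big[Rplus/R0]_(k < m1) (l1 k * bfun adj a (p1 k)) <= z.
  rewrite sum_bfun Hz. apply: sum_le => i _; apply: sum_le => j /andP [ij aij].
  have [[y0 y1] [yi [yj ylo]]] := Hy i j ij aij.
  have anz := a_nz i j aij.
  have E : (o1 i == o1 j) = ~~ posb (a i j) by rewrite H1 // negbK.
  move: (AE i j); rewrite /Epair E /posb. case: Rlt_dec => ha /=.
    case=> ->; apply: Rmult_le_compat_l; lra.
  have ha' : a i j < 0 by lra.
  case=> ->; nra.
have Hz2 : z <= \big[Rplus/R0]_(k < m2) (l2 k * bfun adj a (p2 k)).
  rewrite sum_bfun Hz. apply: sum_le => i _; apply: sum_le => j /andP [ij aij].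
  have [[y0 y1] [yi [yj ylo]]] := Hy i j ij aij.
  have anz := a_nz i j aij.
  have E : (o2 i == o2 j) = ~~ negb_R (a i j) by rewrite H2 // negbK.
  move: (BE i j); rewrite /Epair E /negb_R. case: Rlt_dec => ha /=.
    case=> ->; nra.
  have ha' : 0 < a i j by lra.
  case=> ->; apply: Rmult_le_compat_l; lra.
have [t [Ht Hzt]] : exists t, 0 <= t <= 1 /\
   z = t * \big[Rplus/R0]_(k < m1) (l1 k * bfun adj a (p1 k)) +
       (1 - t) * \big[Rplus/R0]_(k < m2) (l2 k * bfun adj a (p2 k)).
  move: Hz1 Hz2.
  move: (\big[Rplus/R0]_(k < m1) (l1 k * bfun adj a (p1 k))) (\big[Rplus/R0]_(k < m2) (l2 k * bfun adj a (p2 k))) => z1 z2 Hz1 Hz2.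
  case: (Rlt_dec z1 z2) => Hlt.
    have d : 0 < / (z2 - z1) by apply: Rinv_0_lt_compat; lra.
    have dd : (z2 - z1) * / (z2 - z1) = 1 by field; lra.
    exists ((z2 - z) * / (z2 - z1)). split.
      split. apply: Rmult_le_pos; lra.
      apply: (Rle_trans _ ((z2 - z1) * / (z2 - z1))); [apply: Rmult_le_compat_r; lra | lra].
    field. lra.
  exists 1. split; first lra. have -> : z1 = z by lra. ring.
exists (m1 + m2)%N, (mlam t l1 l2), (mpt p1 p2).
split. apply: merge_ge0 => //; lra.
split. by rewrite merge_one.
split. by move=> k; rewrite /mpt; case: split.
split. move=> v. rewrite (merge_sum t l1 l2 p1 p2 (fun p => p v)) -Ax -Bx. ring.
by rewrite (merge_sum t l1 l2 p1 p2 (bfun adj a)).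
Qed.

Lemma posb0 : posb 0 = false.
Proof. rewrite /posb; case: Rlt_dec => // h; lra. Qed.
Lemma posb1 : posb 1 = true.
Proof. rewrite /posb; case: Rlt_dec => // h; lra. Qed.

Lemma tight (A qi qj : R) : A <> 0 -> 0 <= qi <= 1 -> 0 <= qj <= 1 ->
  A * (qi * qj) - ((if posb A then - A / 2 else 0) + A / 2 * qi + A / 2 * qj) = 0 ->
  posb A = (posb qi != posb qj).
Proof.
move=> hA hi hj. rewrite {1 2}/posb; case: Rlt_dec => ha /= H.
  have hb : A * (qi * qj - qi / 2 - qj / 2 + / 2) = 0 by rewrite -H; field.
  case: (Rmult_integral _ _ hb) => // {}hb.
  have p1 : 0 <= qi * qj by nra.
  have p2 : 0 <= (1 - qi) * (1 - qj) by nra.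
  have h1 : qi * qj = 0 by nra.
  have h2 : (1 - qi) * (1 - qj) = 0 by nra.
  case: (Rmult_integral _ _ h1) => e1; case: (Rmult_integral _ _ h2) => e2.
  - lra.
  - have -> : qj = 1 by lra. by rewrite e1 posb0 posb1.
  - have -> : qi = 1 by lra. by rewrite e1 posb0 posb1.
  - lra.
have ha' : A < 0 by lra.
have hb : A * (qi * qj - qi / 2 - qj / 2) = 0 by rewrite -H; field.
case: (Rmult_integral _ _ hb) => // {}hb.
have p1 : 0 <= qi * (1 - qj) by nra.
have p2 : 0 <= qj * (1 - qi) by nra.
have h1 : qi * (1 - qj) = 0 by nra.
have h2 : qj * (1 - qi) = 0 by nra.
case: (Rmult_integral _ _ h1) => e1; case: (Rmult_integral _ _ h2) => e2.
- by rewrite e1 e2 eqxx.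
- lra.
- lra.
- have -> : qi = 1 by lra. have -> : qj = 1 by lra. by rewrite eqxx.
Qed.

Lemma core n (adj : rel 'I_n) a (adj_sym : symmetric adj) (adj_irr : irreflexive adj)
  (a_sym : forall i j, a i j = a j i) (a_nz : forall i j, adj i j -> a i j <> R0)
  (s : seq 'I_n) :
  cycle adj s -> odd (count (fun e => posb (a e.1 e.2)) (zip s (rot 1 s))) ->
  exists x z, inQ adj a x z /\ ~ inConvB adj a x z.
Proof.
move=> Hcyc Hodd.
pose x v := if v \in s then / 2 else 0.
pose y i j := if (i \in s) && (j \in s) then (if posb (a i j) then 0 else / 2) else 0.
exists x, (\big[Rplus/R0]_(i < n) \big[Rplus/R0]_(j < n | (i < j)%N && adj i j) (a i j * y i j)).
split.
  split; first by move=> v; rewrite /x; case: (v \in s); lra.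
  exists y; split => //. move=> i j _ _; rewrite /y /x.
  by case: (i \in s); case: (j \in s); case: (posb (a i j)) => /=; lra.
move=> [m [lam [p [L0 [L1 [Pb [Hx Hz]]]]]]].
have {}L1 : \big[Rplus/R0]_(k < m) lam k = 1 by rewrite L1.
pose both i j := (i \in s) && (j \in s).
pose cA i j := if both i j then (if posb (a i j) then - a i j / 2 else 0) else 0.
pose cB i j := if both i j then a i j / 2 else
                 (if posb (a i j) then 0 else (if i \in s then 0 else a i j)).
pose cC i j := if both i j then a i j / 2 else
                 (if posb (a i j) then 0 else (if i \in s then a i j else 0)).
pose g (q : 'I_n -> R) i j := a i j * (q i * q j) - (cA i j + cB i j * q i + cC i j * q j).
have g0 : forall q i j, in_box q -> adj i j -> 0 <= g q i j.
  move=> q i j Hq aij. have := a_nz i j aij. have := Hq i; have := Hq j.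
  have f1 : 0 <= q i * q j by have := Hq i; have := Hq j; nra.
  have f2 : 0 <= q i * (1 - q j) by have := Hq i; have := Hq j; nra.
  have f3 : 0 <= q j * (1 - q i) by have := Hq i; have := Hq j; nra.
  have f4 : 0 <= (1 - q i) * (1 - q j) by have := Hq i; have := Hq j; nra.
  rewrite /g /cA /cB /cC /both /posb.
  case: (i \in s); case: (j \in s); case: Rlt_dec => ha /= h1 h2 h3; try nra.
have msum : forall i j, \big[Rplus/R0]_(k < m) (lam k * (cA i j + cB i j * p k i + cC i j * p k j))
    = a i j * y i j.
  move=> i j. rewrite sum_aff L1 -!Hx /cA /cB /cC /y /x /both.
  by case: (i \in s); case: (j \in s); case: (posb (a i j)) => /=; field.
have tot : \big[Rplus/R0]_(i < n) \big[Rplus/R0]_(j < n | (i < j)%N && adj i j)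
    \big[Rplus/R0]_(k < m) (lam k * g (p k) i j) = 0.
  rewrite (eq_bigr (fun i : 'I_n => \big[Rplus/R0]_(j < n | (i < j)%N && adj i j)
      (a i j * Epair lam p i j + - (a i j * y i j)))); last first.
    move=> i _. apply: eq_bigr => j _. rewrite /g /Epair.
    rewrite (eq_bigr (fun k => a i j * (lam k * (p k i * p k j)) +
        - (lam k * (cA i j + cB i j * p k i + cC i j * p k j)))); last by move=> *; ring.
    by rewrite sum_split -sum_opp -sum_mulr msum.
  under eq_bigr do rewrite sum_split -sum_opp.
  rewrite sum_split -sum_opp Hz sum_bfun /Epair. exact: Rplus_opp_r.
have Sij0 : forall i j : 'I_n, (i < j)%N -> adj i j ->
    \big[Rplus/R0]_(k < m) (lam k * g (p k) i j) = 0.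
  move=> i j ij aij.
  have Snn : forall i j : 'I_n, (i < j)%N && adj i j -> 0 <= \big[Rplus/R0]_(k < m) (lam k * g (p k) i j).
    move=> i' j' /andP [_ a']. apply: sum_ge0 => k _. apply: Rmult_le_pos; first exact: L0.
    exact: g0 (Pb k) a'.
  have inner' := sum_eq0 (fun i' _ => @sum_ge0 _ _ _ _ (fun j' h => Snn i' j' h)) tot (i := i) isT.
  apply: (sum_eq0 (fun j' h => Snn i j' h) inner').
  by rewrite ij aij.
have [k0 Hk0] : exists k, 0 < lam k.
  case: (pickP (fun k => posb (lam k))) => [k Hk|H0]; first by exists k; apply/posbP.
  exfalso. have : \big[Rplus/R0]_(k < m) lam k <= \big[Rplus/R0]_(k < m) (fun _ => 0) k.
    apply: sum_le => k _. have := H0 k. rewrite /= /posb. case: Rlt_dec => // h _. lra.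
  rewrite big1_eq L1. lra.
have G0 : forall i j : 'I_n, (i < j)%N -> adj i j -> g (p k0) i j = 0.
  move=> i j ij aij.
  have := sum_eq0 (fun k _ => Rmult_le_pos _ _ (L0 k) (g0 _ _ _ (Pb k) aij)) (Sij0 i j ij aij) (i := k0) isT.
  case/Rmult_integral => //. lra.
pose f v := posb (p k0 v).
have tightuv : forall i j : 'I_n, (i < j)%N -> adj i j -> i \in s -> j \in s ->
    posb (a i j) = (f i != f j).
  move=> i j ij aij iS jS. have := G0 i j ij aij.
  rewrite /g /cA /cB /cC /both iS jS /=. apply: tight; [exact: a_nz | exact: Pb | exact: Pb].
have Hc : count (fun e => posb (a e.1 e.2)) (zip s (rot 1 s)) =
          count (fun e => f e.1 != f e.2) (zip s (rot 1 s)).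
  apply: eq_in_count => e He. have [] := cycle_edge_mem Hcyc He.
  case: e {He} => u v /= auv us vs.
  case: (ltngtP u v) => h.
  - exact: tightuv.
  - rewrite a_sym (tightuv v u h) //; last by rewrite adj_sym.
    by rewrite eq_sym.
  - have E : u = v by apply: val_inj.
    by rewrite E adj_irr in auv.
move: Hodd; rewrite Hc. by rewrite (negbTE (cycle_flip f s)).
Qed.
Local Open Scope R_scope.

Lemma posb_neg r : posb (- r) = negb_R r.
Proof. rewrite /posb /negb_R; case: Rlt_dec; case: Rlt_dec => // h1 h2; lra. Qed.

Lemma inQ_neg n (adj : rel 'I_n) a x z :
  inQ adj (fun i j => - a i j) x z -> inQ adj a x (- z).
Proof.
move=> [Hx [y [Hy Hz]]]. split => //; exists y; split => //.
rewrite Hz sum_opp; apply: eq_bigr => i _; rewrite sum_opp; apply: eq_bigr => j _; ring.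
Qed.

Lemma convB_neg n (adj : rel 'I_n) a x z :
  inConvB adj a x z -> inConvB adj (fun i j => - a i j) x (- z).
Proof.
move=> [m [lam [p [L0 [L1 [Pb [Hx Hz]]]]]]].
exists m, lam, p. do 4 (split => //).
rewrite Hz sum_opp; apply: eq_bigr => k _.
have -> : bfun adj (fun i j => - a i j) (p k) = - bfun adj a (p k).
  rewrite /bfun sum_opp; apply: eq_bigr => i _; rewrite sum_opp; apply: eq_bigr => j _; ring.
ring.
Qed.

Close Scope R_scope.

Theorem theorem4 (n : nat) (adj : rel 'I_n) (a : 'I_n -> 'I_n -> R)
  (adj_sym : symmetric adj) (adj_irr : irreflexive adj)
  (a_sym : forall i j, a i j = a j i)
  (a_nz : forall i j, adj i j -> a i j <> R0) :
  (forall (x : 'I_n -> R) (z : R), inQ adj a x z <-> inConvB adj a x z)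
  <-> even_sign_cycles adj a.
Proof.
split.
- move=> H s Hs us cs. split; apply/negP => Hodd.
  + have [x [z [HQ HnC]]] := core adj_sym adj_irr a_sym a_nz cs Hodd.
    apply: HnC. by apply/H.
  + have Hodd' : odd (count (fun e => posb ((fun i j => Ropp (a i j)) e.1 e.2)) (zip s (rot 1 s))).
      by rewrite (eq_count (a2 := fun e => negb_R (a e.1 e.2))) // => e; rewrite /= posb_neg.
    have [x [z [HQ HnC]]] := core (a := fun i j => Ropp (a i j)) adj_sym adj_irr
      (fun i j => f_equal Ropp (a_sym i j))
      (fun i j h => fun e => a_nz i j h (eq_trans (esym (Ropp_involutive _)) (Ropp_eq_0_compat _ e))) cs Hodd'.
    apply: HnC. have := convB_neg (proj1 (H x (Ropp z)) (inQ_neg HQ)).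
    by rewrite Ropp_involutive.
- move=> Hev x z. split; last exact: convB_Q.
  have [o1 Ho1] := labeling (c := fun u v => posb (a u v)) adj_sym adj_irr
    (fun u v _ => f_equal posb (a_sym u v)) (fun s h1 h2 h3 => proj1 (Hev s h1 h2 h3)).
  have [o2 Ho2] := labeling (c := fun u v => negb_R (a u v)) adj_sym adj_irr
    (fun u v _ => f_equal negb_R (a_sym u v)) (fun s h1 h2 h3 => proj2 (Hev s h1 h2 h3)).
  apply: (@Q_convB _ _ _ a_nz o1 o2) => u v huv; [exact: (Ho1 u v huv) | exact: (Ho2 u v huv)].
Qed.
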